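(* Let $G=\{G_n\}_{n\in\mathbb{Z}}$ be a sequence with values in $\mathbb{D}$ and $G_n=0$ for $n<n_0$ (some $n_0\in\mathbb{Z}$). Suppose that for fixed $m\in\mathbb{Z}$ and $p\in\mathbb{N}$ one has $\sum_{s=m+1}^{m+p}|G_s|\leqslant\frac12$. Then there is an absolute constant $C$ such that for all $z\in\mathbb{T}$, $$|\mathfrak{r}(z,G^{\leqslant m+p})-\mathfrak{r}(z,G^{\leqslant m})|\leqslant C\sum_{s=m+1}^{m+p}|G_s|.$$
   Context: $\mathbb{T}$, $\mathbb{D}$ denote the unit circle and open unit disc. $G^{\leqslant M}=G\chi_{n\leqslant M}$ (finitely supported here). For a finitely supported $H$ with values in $\mathbb{D}$: $\widetilde X_n(z)=I$ below the support, $\widetilde X_n=(1-|H_n|^2)^{-1/2}\begin{pmatrix}1&\overline{H_n}z^{-n}\\ H_nz^n&1\end{pmatrix}\widetilde X_{n-1}$, and above the support $\widetilde X_n=\begin{pmatrix}\mathfrak{a}(z,H)&\mathfrak{b}^{( * )}(z,H)\\ \mathfrak{b}(z,H)&\mathfrak{a}^{( * )}(z,H)\end{pmatrix}$ with $f^{( * )}(z)=\overline{f(\bar z^{-1})}$; $\mathfrak{r}(z,H)=\mathfrak{b}(z,H)/\mathfrak{a}^{( * )}(z,H)$. *)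

(* Defs.v *)
From HB Require Import structures.
From mathcomp Require Import all_boot all_order all_algebra.
From mathcomp Require Import complex.
From mathcomp Require Import reals.
Set Implicit Arguments. Unset Strict Implicit. Unset Printing Implicit Defensive.
Import Order.TTheory GRing.Theory Num.Theory.
Local Open Scope ring_scope.

Section Defs.
Variable R : realType.
Local Notation C := R[i].

Definition trunc (G : int -> C) (M : int) : int -> C :=
  fun n => if n <= M then G n else 0.

Definition step (H : int -> C) (z : C) (n : int) : 'M[C]_2 :=
  (sqrtC (1 - `|H n| ^+ 2))^-1 *:
  \matrix_(i < 2, j < 2)
     (if i == j then 1
      else if (i : nat) == 0%N then (H n)^* * z ^ (- n)
      else H n * z ^ n).

(* Xt H lo k = X_{lo+k-1} when X_{lo-1} = I, i.e. the product
   A_{lo+k-1} ... A_{lo+1} A_lo. *)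
Fixpoint Xt (H : int -> C) (z : C) (lo : int) (k : nat) : 'M[C]_2 :=
  match k with
  | 0%N => 1%:M
  | k'.+1 => step H z (lo + k'%:Z) *m Xt H z lo k'
  end.

(* X~_n "above the support": for H supported in [lo, hi], this is X~_hi
   computed from X~_{lo-1} = I (the identity if hi < lo). *)
Definition Xabove (H : int -> C) (z : C) (lo hi : int) : 'M[C]_2 :=
  Xt H z lo (if hi < lo then 0%N else absz (hi - lo + 1)).

Definition fa H z lo hi := Xabove H z lo hi 0 0.
Definition fb H z lo hi := Xabove H z lo hi 1 0.
Definition fastar H z lo hi := Xabove H z lo hi 1 1.

Definition fr (H : int -> C) (z : C) (lo hi : int) : C :=
  fb H z lo hi / fastar H z lo hi.

End Defs.

(* Main.v *)
Require Import Defs.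
From HB Require Import structures.
From mathcomp Require Import all_boot all_order all_algebra.
From mathcomp Require Import complex reals.
From mathcomp Require Import zify ring lra.
Import Order.TTheory GRing.Theory Num.Theory.
Local Open Scope ring_scope.


Set Implicit Arguments. Unset Strict Implicit. Unset Printing Implicit Defensive.
Section Proof.
Variable R : realType.
Local Notation C := R[i].

Definition nr (x : C) : R := complex.Re `|x|.
Lemma nrE x : `|x| = (nr x)%:C%C.
Proof. by rewrite /nr normc_def. Qed.
Lemma nr_ge0 x : 0 <= nr x.
Proof. by rewrite -ler0c -nrE normr_ge0. Qed.
Lemma nrM x y : nr (x * y) = nr x * nr y.
Proof. by apply: complexI; rewrite rmorphM -!nrE normrM. Qed.
Lemma nrD x y : nr (x + y) <= nr x + nr y.
Proof. by rewrite -lecR rmorphD -!nrE ler_normD. Qed.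
Lemma nrJ x : nr x^* = nr x.
Proof. by apply: complexI; rewrite -!nrE norm_conjC. Qed.
Lemma nrN x : nr (- x) = nr x.
Proof. by apply: complexI; rewrite -!nrE normrN. Qed.
Lemma nr1 : nr 1 = 1.
Proof. by apply: complexI; rewrite -!nrE normr1. Qed.
Lemma nrV x : nr x^-1 = (nr x)^-1.
Proof. apply: complexI; rewrite fmorphV -!nrE normfV. done. Qed.
Lemma nr_sq x : (nr x ^+ 2)%:C%C = x * x^*.
Proof. by rewrite -normCK nrE -rmorphXn. Qed.
Lemma nr_eq0 x : (nr x == 0) = (x == 0).
Proof. by rewrite -[x == 0]normr_eq0 nrE (inj_eq (@complexI _)). Qed.
Lemma nrB x y : nr x - nr y <= nr (x + y).
Proof. have := nrD (x + y) (- y). rewrite nrN addrK. lra. Qed.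


Definition P (X : 'M[C]_2) := X 1 1 = (X 0 0)^* /\ X 0 1 = (X 1 0)^* /\
  X 0 0 * (X 0 0)^* - X 1 0 * (X 1 0)^* = 1.

Lemma mul2E (X Y : 'M[C]_2) i j : (X *m Y) i j = X i 0 * Y 0 j + X i 1 * Y 1 j.
Proof. rewrite mxE big_ord_recl big_ord1. have -> : (lift ord0 ord0 : 'I_2) = 1 by apply/val_inj. done. Qed.

Lemma PM X Y : P X -> P Y -> P (X *m Y).
Proof.
move=> [x11 [x01 dX]] [y11 [y01 dY]].
rewrite /P !mul2E x11 x01 y11 y01 !rmorphD !rmorphM /= !conjCK.
split; first by ring. split; first by ring.
rewrite -[RHS](mulr1 1) -{1}dX -dY. ring.
Qed.

Lemma P1 : P 1%:M.
Proof. by rewrite /P !mxE /= conjC1 conjC0 mulr0 subr0 mulr1. Qed.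

Lemma conjXz (x : C) (n : int) : (x ^ n)^* = (x^*) ^ n.
Proof.
case: n => k; first by rewrite -!exprnP rmorphXn.
by rewrite NegzE -!exprnN fmorphV rmorphXn.
Qed.


Lemma zJ (z : C) : `|z| = 1 -> z^* = z^-1.
Proof.
move=> hz; have z0 : z != 0 by rewrite -normr_eq0 hz oner_eq0.
by apply: (mulfI z0); rewrite divff // -normCK hz expr1n.
Qed.

Lemma zXzJ (z : C) n : `|z| = 1 -> (z ^ n)^* = z ^ (- n).
Proof. by move=> hz; rewrite conjXz zJ // exprz_inv. Qed.

Lemma nr_zX (z : C) n : `|z| = 1 -> nr (z ^ n) = 1.
Proof.
move=> hz; have z0 : z \is a GRing.unit by rewrite unitfE -normr_eq0 hz oner_eq0.
have h : (nr (z ^ n) ^+ 2)%:C%C = 1.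
  by rewrite nr_sq zXzJ // -exprzDr // subrr expr0z.
have h2 : nr (z ^ n) ^+ 2 = 1 by apply: (@complexI R); rewrite h.
have := nr_ge0 (z ^ n); nra.
Qed.

Definition cf (H : int -> C) n : C := (sqrtC (1 - `|H n| ^+ 2))^-1.

Lemma stepE H z n : step H z n 0 0 = cf H n /\ step H z n 1 1 = cf H n /\
  step H z n 1 0 = cf H n * (H n * z ^ n) /\
  step H z n 0 1 = cf H n * ((H n)^* * z ^ (- n)).
Proof. by rewrite /step !mxE /= !mulr1. Qed.


Lemma cf_facts H n : `|H n| < 1 ->
  0 <= cf H n /\ cf H n ^+ 2 * (1 - `|H n| ^+ 2) = 1.
Proof.
move=> h; have x0 : 0 < 1 - `|H n| ^+ 2 by rewrite subr_gt0 expr_lt1.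
split; first by rewrite /cf invr_ge0 sqrtC_ge0 ltW.
by rewrite /cf exprVn sqrtCK mulVf // gt_eqF.
Qed.

Lemma cfJ H n : `|H n| < 1 -> (cf H n)^* = cf H n.
Proof. by case/cf_facts => h _; apply: conj_Creal; apply: ger0_real. Qed.

Lemma nr_cf H n : `|H n| < 1 -> nr (cf H n) ^+ 2 * (1 - nr (H n) ^+ 2) = 1.
Proof.
case/cf_facts => h0 h1; apply: (@complexI R).
rewrite rmorphM rmorphB rmorph1 !rmorphXn /= -!nrE ger0_norm //.
Qed.

Lemma P_step H z n : `|H n| < 1 -> `|z| = 1 -> P (step H z n).
Proof.
move=> hH hz; have [e00 [e11 [e10 e01]]] := stepE H z n.
rewrite /P e00 e11 e10 e01 (cfJ hH); split => //.
split; first by rewrite !rmorphM /= (cfJ hH) zXzJ.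
have [_ h1] := cf_facts hH.
rewrite !rmorphM /= (cfJ hH) zXzJ // -h1 normCK.
have -> : z ^ (- n) = (z ^ n)^-1.
  by rewrite -exprz_inv expfV.
have zn0 : z ^ n != 0.
  by rewrite -normr_eq0 nrE nr_zX // rmorph1 oner_eq0.
field.
by [].
Qed.


Lemma Xt_split (H : int -> C) z L k j :
  Xt H z L (k + j) = Xt H z (L + k%:Z) j *m Xt H z L k.
Proof.
elim: j => [|j IH]; first by rewrite addn0 /= mul1mx.
by rewrite addnS /= IH mulmxA PoszD addrA.
Qed.

Lemma Xt_ext (H1 H2 : int -> C) z L k :
  (forall s, (s < k)%N -> H1 (L + s%:Z) = H2 (L + s%:Z)) ->
  Xt H1 z L k = Xt H2 z L k.
Proof.
elim: k => [//|k IH] h /=.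
rewrite IH; last by move=> s hs; apply: h; apply: ltnW.
by rewrite /step h.
Qed.

Lemma step0 (H : int -> C) z n : H n = 0 -> step H z n = 1%:M.
Proof.
move=> h; apply/matrixP => i j; rewrite /step !mxE h normr0 expr0n /= subr0 sqrtC1 invr1 mul1r.
case: i j => [[|[|//]]] ? [[|[|//]]] ? //=; by rewrite ?conjC0 ?mul0r.
Qed.

Lemma Xt_zero (H : int -> C) z L k : (forall s, (s < k)%N -> H (L + s%:Z) = 0) ->
  Xt H z L k = 1%:M.
Proof.
elim: k => [//|k IH] h /=.
rewrite IH; last by move=> s hs; apply: h; apply: ltnW.
by rewrite step0 ?mul1mx // h.
Qed.

Lemma P_Xt (H : int -> C) z L k : (forall n, `|H n| < 1) -> `|z| = 1 -> P (Xt H z L k).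
Proof.
move=> hH hz; elim: k => [|k IH] /=; first exact: P1.
by apply: PM => //; apply: P_step.
Qed.


Lemma Xabove_eq (H : int -> C) z lo hi L : (forall n, n < lo -> H n = 0) ->
  L <= lo -> L <= hi + 1 -> Xabove H z lo hi = Xt H z L (absz (hi + 1 - L)%R).
Proof.
move=> h0 hL1 hL2; rewrite /Xabove; case: ifP => hlt.
  by rewrite /= Xt_zero // => s hs; apply: h0; lia.
have -> : absz (hi + 1 - L)%R = (absz (lo - L)%R + absz (hi - lo + 1)%R)%N by lia.
rewrite Xt_split.
have -> : L + (absz (lo - L)%R)%:Z = lo by lia.
by rewrite (@Xt_zero H z L) ?mulmx1 // => s hs; apply: h0; lia.
Qed.

Lemma nr_lt1 (x : C) : `|x| < 1 -> nr x < 1.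
Proof. by rewrite -ltcR -nrE. Qed.

Definition Phi (X : 'M[C]_2) := nr (X 0 0) + nr (X 1 0).

Lemma Phi_ge0 X : 0 <= Phi X.
Proof. by rewrite /Phi addr_ge0 ?nr_ge0. Qed.

Lemma Phi_mul Y X : P Y -> Phi (Y *m X) <= Phi Y * Phi X.
Proof.
move=> [y11 [y01 _]]; rewrite /Phi !mul2E y11 y01.
have h1 := nrD (Y 0 0 * X 0 0) ((Y 1 0)^* * X 1 0).
have h2 := nrD (Y 1 0 * X 0 0) ((Y 0 0)^* * X 1 0).
rewrite !nrM !nrJ in h1 h2.
have := nr_ge0 (Y 0 0); have := nr_ge0 (Y 1 0).
have := nr_ge0 (X 0 0); have := nr_ge0 (X 1 0).
nra.
Qed.


Lemma growth_real (cr t S F F' : R) : 0 <= cr -> 0 <= t -> t < 1 -> 0 <= S ->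
  S + t <= 1/2 -> 0 <= F -> cr ^+ 2 * (1 - t ^+ 2) = 1 ->
  F * (1 - S) <= 1 -> F' <= (cr + cr * t) * F -> F' * (1 - (S + t)) <= 1.
Proof.
move=> c0 t0 t1 S0 St F0 hc hF hF'.
set u := (cr + cr * t) * F.
have u0 : 0 <= u by rewrite /u mulr_ge0 // addr_ge0 // mulr_ge0.
have e1 : F' * (1 - (S + t)) <= u * (1 - (S + t)).
  by apply: ler_wpM2r => //; lra.
have e2 : u * (1 - (S + t)) <= u * ((1 - S) * (1 - t)).
  by apply: ler_wpM2l => //; nra.
have e3 : u * ((1 - S) * (1 - t)) = (cr * (1 - t ^+ 2)) * (F * (1 - S)).
  by rewrite /u; ring.
have v0 : 0 <= cr * (1 - t ^+ 2) by apply: mulr_ge0 => //; nra.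
have e4 : (cr * (1 - t ^+ 2)) * (F * (1 - S)) <= cr * (1 - t ^+ 2).
  by rewrite -[X in _ <= X]mulr1; apply: ler_wpM2l.
have e5 : cr * (1 - t ^+ 2) <= 1.
  have : (cr * (1 - t ^+ 2)) ^+ 2 <= 1.
    have -> : (cr * (1 - t ^+ 2)) ^+ 2 = (cr ^+ 2 * (1 - t ^+ 2)) * (1 - t ^+ 2) by ring.
    rewrite hc mul1r; nra.
  nra.
lra.
Qed.

Lemma growth (H : int -> C) z L k : (forall n, `|H n| < 1) -> `|z| = 1 ->
  \sum_(s < k) nr (H (L + s%:Z)) <= 1/2 ->
  Phi (Xt H z L k) * (1 - \sum_(s < k) nr (H (L + s%:Z))) <= 1.
Proof.
move=> hH hz; elim: k => [|k IH].
  rewrite big_ord0 /= /Phi !mxE /= subr0 mulr1 nr1.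
  have -> : nr 0 = 0 by apply: (@complexI R); rewrite -nrE normr0.
  by rewrite addr0.
rewrite big_ord_recr /= => hS.
set S := \sum_(s < k) _ in hS IH *.
set t := nr (H (L + k%:Z)).
have t0 : 0 <= t := nr_ge0 _.
have t1 : t < 1 by apply: nr_lt1.
have S0 : 0 <= S by apply: sumr_ge0 => s _; apply: nr_ge0.
have hc := nr_cf (hH (L + k%:Z)).
have [e00 [e11 [e10 e01]]] := stepE H z (L + k%:Z).
apply: (@growth_real (nr (cf H (L + k%:Z))) t S (Phi (Xt H z L k))) => //.
- exact: nr_ge0.
- exact: Phi_ge0.
- by apply: IH; lra.
- have := Phi_mul (Xt H z L k) (P_step (hH (L + k%:Z)) hz).
  rewrite {2}/Phi e00 e10 !nrM nr_zX //. by rewrite mulr1.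
Qed.


Lemma detR (X : 'M[C]_2) : P X -> nr (X 0 0) ^+ 2 - nr (X 1 0) ^+ 2 = 1.
Proof.
move=> [_ [_ d]]; apply: (@complexI R).
rewrite rmorphB rmorph1 /= -d -!nr_sq //.
Qed.

Lemma beta_bound (Y : 'M[C]_2) (S : R) : P Y -> 0 <= S -> S <= 1/2 ->
  Phi Y * (1 - S) <= 1 -> nr (Y 1 0) <= 2 * S /\ Phi Y <= 2.
Proof.
move=> hY S0 S1; have d := detR hY; rewrite /Phi.
have := nr_ge0 (Y 0 0); have := nr_ge0 (Y 1 0).
set A := nr (Y 0 0); set B := nr (Y 1 0) => B0 A0 h.
have ApB : A + B <= 1 + 2 * S by nra.
have AB1 : 1 <= A + B by nra.
have AmB : 1 - S <= A - B.
  have e : (A - B) * (A + B) = 1 by rewrite -d; ring.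
  nra.
split; nra.
Qed.

Lemma fid (a b be ac bc alc : C) : ac != 0 -> be * bc + alc * ac != 0 ->
  (be * a + alc * b) / (be * bc + alc * ac) - b / ac =
  be * (a * ac - b * bc) / (ac * (be * bc + alc * ac)).
Proof. move=> h1 h2. field. by apply/andP. Qed.

Lemma core (X Y : 'M[C]_2) : P X -> P Y ->
  nr ((Y *m X) 1 0 / (Y *m X) 1 1 - X 1 0 / X 1 1) <= nr (Y 1 0) * Phi Y.
Proof.
move=> hX hY; have dX := detR hX; have dY := detR hY.
have [x11 [x01 cX]] := hX; have [y11 [y01 cY]] := hY.
rewrite !mul2E x11 x01 y11.
set a := X 0 0; set b := X 1 0; set al := Y 0 0; set be := Y 1 0.
rewrite -/a -/b -/al -/be in dX dY cX cY *.
set D := be * b^* + al^* * a^*.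
have hD : nr (al^* * a^*) - nr (be * b^*) <= nr D.
  by rewrite /D [be * b^* + _]addrC; exact: nrB.
rewrite !nrM !nrJ in hD.
rewrite /Phi -/al -/be.
have := nr_ge0 a; have := nr_ge0 b; have := nr_ge0 al; have := nr_ge0 be.
have := nr_ge0 D.
set a' := nr a; set b' := nr b; set A := nr al; set B := nr be; set d := nr D.
move=> d0 B0 A0 b0 a0.
have ba : b' <= a' by nra.
have BA : B <= A by nra.
have e1 : (A - B) * a' <= d by nra.
have e : (A - B) * (A + B) = 1 by rewrite -dY; ring.
have key : 1 <= a' * d * (A + B).
  have : a' * ((A - B) * a') * (A + B) <= a' * d * (A + B).
    by apply: ler_wpM2r; [nra | apply: ler_wpM2l].
  have -> : a' * ((A - B) * a') * (A + B) = a' ^+ 2 by rewrite -[RHS]mul1r -e; ring.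
  nra.
have a'0 : a' != 0 by apply/eqP => h; move: key; rewrite h; nra.
have d'0 : d != 0 by apply/eqP => h; move: key; rewrite h; nra.
have an0 : a^* != 0 by rewrite conjC_eq0 -nr_eq0.
have Dn0 : D != 0 by rewrite -nr_eq0.
rewrite (fid _ _ an0 Dn0).
rewrite cX mulr1 nrM nrV nrM nrJ -/a' -/d -/B.
rewrite ler_pdivrMr; last by nra.
nra.
Qed.


Lemma trunc0 (G : int -> C) n0 M : (forall n, n < n0 -> G n = 0) ->
  forall n, n < n0 -> trunc G M n = 0.
Proof. by move=> h n hn; rewrite /trunc h // if_same. Qed.

Lemma main_real (G : int -> C) (n0 m : int) (p : nat) (z : C) :
    (forall n, `|G n| < 1) ->
    (forall n, n < n0 -> G n = 0) ->
    \sum_(s < p) nr (G (m + s.+1%:Z)) <= 1 / 2 -> `|z| = 1 ->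
    nr (fr (trunc G (m + p%:Z)) z n0 (m + p%:Z) - fr (trunc G m) z n0 m)
      <= 4 * \sum_(s < p) nr (G (m + s.+1%:Z)).
Proof.
move=> hG1 hG0 hS hz.
set L := if n0 <= m + 1 then n0 else m + 1.
have hL1 : L <= n0 by rewrite /L; case: ifP => h; lia.
have hL2 : L <= m + 1 by rewrite /L; case: ifP => h; lia.
rewrite /fr /fb /fastar.
rewrite (@Xabove_eq _ _ _ _ L (trunc0 _ hG0)) //; last by lia.
rewrite (@Xabove_eq _ _ _ _ L (trunc0 _ hG0)) //.
set k := absz (m + 1 - L)%R.
have -> : absz (m + p%:Z + 1 - L)%R = (k + p)%N by rewrite /k; lia.
rewrite Xt_split.
have -> : L + k%:Z = m + 1 by rewrite /k; lia.
have -> : Xt (trunc G (m + p%:Z)) z L k = Xt G z L k.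
  by apply: Xt_ext => s hs; rewrite /trunc ifT //; rewrite /k in hs; lia.
have -> : Xt (trunc G m) z L k = Xt G z L k.
  by apply: Xt_ext => s hs; rewrite /trunc ifT //; rewrite /k in hs; lia.
have -> : Xt (trunc G (m + p%:Z)) z (m + 1) p = Xt G z (m + 1) p.
  by apply: Xt_ext => s hs; rewrite /trunc ifT //; lia.
have eS : \sum_(s < p) nr (G (m + s.+1%:Z)) = \sum_(s < p) nr (G (m + 1 + s%:Z)).
  by apply: eq_bigr => s _; congr (nr (G _)); lia.
rewrite eS in hS *.
set S := \sum_(s < p) _ in hS *.
have S0 : 0 <= S by apply: sumr_ge0 => s _; apply: nr_ge0.
have hX := P_Xt L k hG1 hz.
have hY := P_Xt (m + 1) p hG1 hz.
have hgr := growth hG1 hz hS.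
have [hb hp] := beta_bound hY S0 hS hgr.
apply: le_trans (core hX hY) _.
have := nr_ge0 (Xt G z (m + 1) p 1 0); have := Phi_ge0 (Xt G z (m + 1) p).
nra.
Qed.

End Proof.

Unset Implicit Arguments.
Local Open Scope complex_scope.

Theorem lemma4p3 (R : realType) :
  exists K : R,
  forall (G : int -> R[i]) (n0 m : int) (p : nat),
    (forall n, `|G n| < 1) ->
    (forall n, n < n0 -> G n = 0) ->
    \sum_(s < p) `|G (m + s.+1%:Z)| <= 1 / 2 ->
    forall z : R[i], `|z| = 1 ->
      `|fr (trunc G (m + p%:Z)) z n0 (m + p%:Z) - fr (trunc G m) z n0 m|
        <= K%:C * \sum_(s < p) `|G (m + s.+1%:Z)|.
Proof.
exists 4 => G n0 m p hG1 hG0 hS z hz.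
have hs : \sum_(s < p) `|G (m + s.+1%:Z)| = (\sum_(s < p) nr (G (m + s.+1%:Z)))%:C.
  by rewrite rmorph_sum; apply: eq_bigr => s _; rewrite nrE.
have h2 : (1 / 2 : R[i]) = (1 / 2 : R)%:C.
  by rewrite rmorphM rmorph1 fmorphV rmorph_nat.
rewrite hs h2 lecR in hS.
rewrite hs nrE -rmorphM lecR.
exact: main_real.
Qed.
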